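(* In the privacy game, assume $\mathcal{Y}=\mathcal{X}$ and $\varrho\ge 0$. Let $\beta'\in B$ be given by $\beta'_{\hat x y}=1$ if $\hat x=y$ and $\beta'_{\hat x y}=0$ if $\hat x\neq y$, and let $\alpha'\in\arg\min_{\alpha\in A}[\xi(\alpha,\beta')+\varrho\zeta(\alpha)]$. Then $(\alpha',\beta')$ is a Nash equilibrium, i.e. $U(\alpha',\beta')\le U(\alpha,\beta')$ for all $\alpha\in A$ and $V(\alpha',\beta')\le V(\alpha',\beta)$ for all $\beta\in B$.
   Context: Privacy game. $\mathcal{X},\mathcal{W},\mathcal{Y}$ are finite nonempty sets; $p$ is a joint probability mass function of $(X,Z,W)$ on $\mathcal{X}\times\mathcal{X}\times\mathcal{W}$; $d:\mathcal{X}\times\mathcal{X}\to\mathbb{R}_{\ge 0}$; $\varrho$ is the privacy ratio. Sender policies: $A=\{\alpha=(\alpha_{yzw}):\alpha_{yzw}\in[0,1],\ \sum_{y\in\mathcal{Y}}\alpha_{yzw}=1\ \forall (z,w)\in\mathcal{X}\times\mathcal{W}\}$, with $\alpha_{yzw}=\mathbb{P}\{Y=y\mid Z=z,W=w\}$ ($Y$ conditionally independent of $X$ given $(Z,W)$). Receiver policies: $B=\{\beta=(\beta_{\hat x y}):\beta_{\hat x y}\in[0,1],\ \sum_{\hat x\in\mathcal{X}}\beta_{\hat x y}=1\ \forall y\in\mathcal{Y}\}$, with $\beta_{\hat x y}=\mathbb{P}\{\hat X=\hat x\mid Y=y\}$ ($\hat X$ conditionally independent of $(X,Z,W)$ given $Y$).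 Define $\xi(\alpha,\beta)=\mathbb{E}\{d(X,\hat X)\}=\sum_{x,\hat x\in\mathcal{X}}\sum_{y\in\mathcal{Y}}\sum_{z\in\mathcal{X}}\sum_{w\in\mathcal{W}}d(x,\hat x)\beta_{\hat x y}\alpha_{yzw}p(x,z,w)$ and $\zeta(\alpha)=I(Y;W)=\sum_{y,w}P_{yw}\log\frac{P_{yw}}{P_y P_w}$ (with $0\log 0=0$), where $P_{yw}=\sum_{z,x}\alpha_{yzw}p(x,z,w)$, $P_y=\sum_{w}P_{yw}$, $P_w=\sum_{z,x}p(x,z,w)$. Sender cost $U(\alpha,\beta)=\xi(\alpha,\beta)+\varrho\zeta(\alpha)$; receiver cost $V(\alpha,\beta)=\xi(\alpha,\beta)$. *)

(* Defs.v *)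
From mathcomp Require Import all_boot all_order all_algebra.
From mathcomp Require Import reals exp.
Set Implicit Arguments. Unset Strict Implicit. Unset Printing Implicit Defensive.
Import Order.TTheory GRing.Theory Num.Theory.
Local Open Scope ring_scope.

Section PrivacyGame.
Variables (R : realType) (X W Y : finType).

(* joint pmf p(x,z,w) of (X,Z,W) on X * X * W *)
Definition is_pmf (p : X -> X -> W -> R) : Prop :=
  (forall x z w, 0 <= p x z w) /\ \sum_x \sum_z \sum_w p x z w = 1.

(* sender policies: alpha y z w = P{Y = y | Z = z, W = w} *)
Definition in_A (alpha : Y -> X -> W -> R) : Prop :=
  (forall y z w, 0 <= alpha y z w <= 1) /\
  (forall z w, \sum_y alpha y z w = 1).

(* receiver policies: beta xh y = P{Xhat = xh | Y = y} *)
Definition in_B (beta : X -> Y -> R) : Prop :=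
  (forall xh y, 0 <= beta xh y <= 1) /\
  (forall y, \sum_xh beta xh y = 1).

Definition xi (p : X -> X -> W -> R) (d : X -> X -> R)
  (alpha : Y -> X -> W -> R) (beta : X -> Y -> R) : R :=
  \sum_x \sum_xh \sum_y \sum_z \sum_w
     d x xh * beta xh y * alpha y z w * p x z w.

Definition P_yw (p : X -> X -> W -> R) (alpha : Y -> X -> W -> R) y w : R :=
  \sum_z \sum_x alpha y z w * p x z w.
Definition P_y (p : X -> X -> W -> R) (alpha : Y -> X -> W -> R) y : R :=
  \sum_w P_yw p alpha y w.
Definition P_w (p : X -> X -> W -> R) w : R :=
  \sum_z \sum_x p x z w.

(* mutual information I(Y;W), with the convention 0 log 0 = 0 *)
Definition zeta (p : X -> X -> W -> R) (alpha : Y -> X -> W -> R) : R :=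
  \sum_y \sum_w
    (if P_yw p alpha y w == 0 then 0
     else P_yw p alpha y w *
            ln (P_yw p alpha y w / (P_y p alpha y * P_w p w))).

Definition U_cost p d (rho : R) alpha beta : R := xi p d alpha beta + rho * zeta p alpha.
Definition V_cost p d alpha beta : R := xi p d alpha beta.

End PrivacyGame.

Definition beta_id (R : realType) (X : finType) : X -> X -> R :=
  fun xh y => if xh == y then 1 else 0.
Arguments beta_id R X : clear implicits.

(* Main.v *)
Require Import Defs.
From mathcomp Require Import all_boot all_order all_algebra.
From mathcomp Require Import reals exp.
From mathcomp Require Import ring lra.
Import Order.TTheory GRing.Theory Num.Theory.
Local Open Scope ring_scope.

Lemma ln_sub_ge {R : realType} (u v : R) : 0 < u -> 0 < v -> 1 - v / u <= ln u - ln v.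
Proof.
move=> hu hv.
have h := @le_ln1Dx R (v / u - 1).
have hvu : 0 < v / u by rewrite divr_gt0.
have : ln (v / u) <= v / u - 1.
  have e : 1 + (v / u - 1) = v / u by ring.
  rewrite -{1}e; apply: h; lra.
rewrite ln_div ?posrE //. lra.
Qed.

Definition Tf {R : realType} (Q u V : R) : R := if u == 0 then 0 else u * ln (u / (V * Q)).

Lemma logsum (R : realType) (a a' A A' Q : R) : 0 <= a -> 0 <= a' -> a <= A -> a' <= A' ->
  a <= Q -> a' <= Q -> Tf Q (a + a') (A + A') <= Tf Q a A + Tf Q a' A'.
Proof.
move=> ha ha' hA hA' hQ hQ'; rewrite /Tf.
have [->|a0] := eqVneq a 0; have [->|a'0] := eqVneq a' 0.
- by rewrite addr0 eqxx; lra.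
- have a'p : 0 < a' by rewrite lt_def a'0.
  rewrite add0r (negbTE a'0) add0r.
  have A'p : 0 < A' by lra. have Qp : 0 < Q by lra.
  rewrite ler_pM2l // ler_ln ?posrE ?divr_gt0 ?mulr_gt0 //; last lra.
  rewrite ler_pM2l // lef_pV2 ?posrE ?mulr_gt0 //; last lra.
  rewrite ler_pM2r //; lra.
- have ap : 0 < a by rewrite lt_def a0.
  rewrite addr0 (negbTE a0) addr0.
  have Ap : 0 < A by lra. have Qp : 0 < Q by lra.
  rewrite ler_pM2l // ler_ln ?posrE ?divr_gt0 ?mulr_gt0 //; last lra.
  rewrite ler_pM2l // lef_pV2 ?posrE ?mulr_gt0 //; last lra.
  rewrite ler_pM2r //; lra.
- have ap : 0 < a by rewrite lt_def a0.
  have a'p : 0 < a' by rewrite lt_def a'0.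
  have Ap : 0 < A by lra. have Qp : 0 < Q by lra. have A'p : 0 < A' by lra.
  rewrite ?(negbTE a0) ?(negbTE a'0).
  have -> : (a + a' == 0) = false by apply/negbTE; rewrite gt_eqF //; lra.
  set v := (a + a') / ((A + A') * Q).
  set u := a / (A * Q). set u' := a' / (A' * Q).
  have vp : 0 < v by rewrite divr_gt0 ?mulr_gt0 //; lra.
  have up : 0 < u by rewrite divr_gt0 ?mulr_gt0.
  have u'p : 0 < u' by rewrite divr_gt0 ?mulr_gt0.
  have h1 := @ln_sub_ge _ u v up vp. have h2 := @ln_sub_ge _ u' v u'p vp.
  have e : a * (1 - v / u) + a' * (1 - v / u') = 0.
    rewrite /u /u' /v. field.
    apply/and5P; split; rewrite ?gt_eqF //; lra.
  have k1 := ler_pM2l ap; have k2 := ler_pM2l a'p.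
  have := (ler_wpM2l (ltW ap) h1). have := (ler_wpM2l (ltW a'p) h2).
  lra.
Qed.

Section Main.
Variables (R : realType) (X W : finType).

Lemma sum_two (F : X -> R) {x1 y0 : X} : x1 != y0 ->
  \sum_y F y = F x1 + F y0 + \sum_(y | (y != x1) && (y != y0)) F y.
Proof.
move=> ne; rewrite (bigD1 x1) //= (bigD1 y0) /=; last by rewrite eq_sym.
rewrite addrA; congr (_ + _); apply: eq_bigl => y; by rewrite andbC.
Qed.

Definition merge (f : X -> R) (x1 y0 y : X) : R :=
  if y == x1 then f x1 + f y0 else if y == y0 then 0 else f y.

Lemma merge_x1 f x1 y0 : merge f x1 y0 x1 = f x1 + f y0.
Proof. by rewrite /merge eqxx. Qed.
Lemma merge_y0 f x1 y0 : x1 != y0 -> merge f x1 y0 y0 = 0.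
Proof. by move=> ne; rewrite /merge eq_sym (negbTE ne) eqxx. Qed.
Lemma merge_rest f x1 y0 y : (y != x1) && (y != y0) -> merge f x1 y0 y = f y.
Proof. by case/andP=> /negbTE h1 /negbTE h2; rewrite /merge h1 h2. Qed.

Lemma sum_merge f x1 y0 : x1 != y0 -> \sum_y merge f x1 y0 y = \sum_y f y.
Proof.
move=> ne; rewrite !(sum_two _ ne) merge_x1 merge_y0 // addr0.
congr (_ + _); apply: eq_bigr => y; exact: merge_rest.
Qed.

Lemma merge_sum (I : finType) (G : X -> I -> R) x1 y0 y :
  merge (fun y => \sum_i G y i) x1 y0 y = \sum_i merge (fun y => G y i) x1 y0 y.
Proof.
rewrite /merge; case: ifP => _; first by rewrite big_split.
by case: ifP => _ //; rewrite big1.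
Qed.

Lemma merge_mulr f c x1 y0 y : merge f x1 y0 y * c = merge (fun y => f y * c) x1 y0 y.
Proof. rewrite /merge; case: ifP => _; first by rewrite mulrDl. by case: ifP => _ //; rewrite mul0r. Qed.
Lemma merge_mull f c x1 y0 y : c * merge f x1 y0 y = merge (fun y => c * f y) x1 y0 y.
Proof. rewrite /merge; case: ifP => _; first by rewrite mulrDr. by case: ifP => _ //; rewrite mulr0. Qed.

Definition C (p : X -> X -> W -> R) (d : X -> X -> R) (alpha : X -> X -> W -> R) xh y : R :=
  \sum_x \sum_z \sum_w d x xh * alpha y z w * p x z w.

Lemma xiE p d alpha beta : xi p d alpha beta = \sum_y \sum_xh beta xh y * C p d alpha xh y.
Proof.
rewrite /xi /C.
under eq_bigr do rewrite exchange_big /=.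
rewrite exchange_big /=; apply: eq_bigr => y _.
rewrite exchange_big /=; apply: eq_bigr => xh _.
rewrite mulr_sumr; apply: eq_bigr => x _.
rewrite mulr_sumr; apply: eq_bigr => z _.
rewrite mulr_sumr; apply: eq_bigr => w _.
rewrite !mulrA; congr (_ * _ * _); by rewrite mulrC.
Qed.

Lemma xi_id p d alpha : xi p d alpha (beta_id R X) = \sum_y C p d alpha y y.
Proof.
rewrite xiE; apply: eq_bigr => y _.
rewrite (bigD1 y) //= /beta_id eqxx mul1r big1 ?addr0 // => xh /negbTE ->.
by rewrite mul0r.
Qed.

Lemma single_le (I : finType) (F : I -> R) y : (forall y, 0 <= F y) -> F y <= \sum_y F y.
Proof.
move=> h; rewrite (bigD1 y) //= lerDl; exact: sumr_ge0.
Qed.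

Theorem main_part2 (p : X -> X -> W -> R) (d : X -> X -> R) (rho : R)
  (alpha' : X -> X -> W -> R) :
  is_pmf p -> 0 <= rho -> in_A alpha' ->
  (forall alpha : X -> X -> W -> R, in_A alpha ->
     xi p d alpha' (beta_id R X) + rho * zeta p alpha'
       <= xi p d alpha (beta_id R X) + rho * zeta p alpha) ->
  forall y0 xh, C p d alpha' y0 y0 <= C p d alpha' xh y0.
Proof.
move=> [p0 p1] rho0 [a01 a1] opt y0 x1.
rewrite leNgt; apply/negP => hlt.
have ne : x1 != y0.
  by apply/eqP => e; rewrite e ltxx in hlt.
pose a2 y z w := merge (fun y => alpha' y z w) x1 y0 y.
have a0 y z w : 0 <= alpha' y z w by case/andP: (a01 y z w).
have a2A : in_A a2.
  split; last first.
    by move=> z w; rewrite /a2 sum_merge // a1.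
  move=> y z w; rewrite /a2 /merge.
  case: ifP => _.
    rewrite addr_ge0 //= -(a1 z w) (sum_two _ ne) lerDl; apply: sumr_ge0 => *; exact: a0.
  by case: ifP => _ //; rewrite lexx ler01.
have Pyw2 y w : P_yw p a2 y w = merge (fun y => P_yw p alpha' y w) x1 y0 y.
  rewrite /P_yw merge_sum; apply: eq_bigr => z _.
  rewrite merge_sum; apply: eq_bigr => x _; by rewrite merge_mulr.
have Py2 y : P_y p a2 y = merge (fun y => P_y p alpha' y) x1 y0 y.
  rewrite /P_y merge_sum; apply: eq_bigr => w _; exact: Pyw2.
have C2 xh y : C p d a2 xh y = merge (fun y => C p d alpha' xh y) x1 y0 y.
  rewrite /C merge_sum; apply: eq_bigr => x _.
  rewrite merge_sum; apply: eq_bigr => z _.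
  rewrite merge_sum; apply: eq_bigr => w _.
  by rewrite /a2 merge_mull merge_mulr.
have hxi : xi p d a2 (beta_id R X) =
    xi p d alpha' (beta_id R X) - C p d alpha' y0 y0 + C p d alpha' x1 y0.
  rewrite !xi_id !(sum_two _ ne) !C2 merge_x1 merge_y0 //.
  have -> : \sum_(y | (y != x1) && (y != y0)) C p d a2 y y =
            \sum_(y | (y != x1) && (y != y0)) C p d alpha' y y.
    by apply: eq_bigr => y hy; rewrite C2 merge_rest.
  lra.
have Pyw0 y w : 0 <= P_yw p alpha' y w.
  by apply: sumr_ge0 => z _; apply: sumr_ge0 => x _; rewrite mulr_ge0.
have PywPy y w : P_yw p alpha' y w <= P_y p alpha' y.
  by rewrite /P_y; apply: single_le => w'; exact: Pyw0.
have PywPw y w : P_yw p alpha' y w <= P_w p w.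
  apply: ler_sum => z _; apply: ler_sum => x _.
  by rewrite ler_piMl //; case/andP: (a01 y z w).
have zE alpha : zeta p alpha =
    \sum_y \sum_w Tf (P_w p w) (P_yw p alpha y w) (P_y p alpha y) by [].
have hz : zeta p a2 <= zeta p alpha'.
  rewrite !zE !(sum_two _ ne).
  have -> : \sum_(y | (y != x1) && (y != y0)) \sum_w Tf (P_w p w) (P_yw p a2 y w) (P_y p a2 y)
          = \sum_(y | (y != x1) && (y != y0)) \sum_w Tf (P_w p w) (P_yw p alpha' y w) (P_y p alpha' y).
    by apply: eq_bigr => y hy; apply: eq_bigr => w _; rewrite Pyw2 Py2 !merge_rest.
  have -> : \sum_w Tf (P_w p w) (P_yw p a2 y0 w) (P_y p a2 y0) = 0.
    by apply: big1 => w _; rewrite Pyw2 merge_y0 // /Tf eqxx.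
  rewrite addr0 lerD2r -big_split /=; apply: ler_sum => w _.
  rewrite Pyw2 Py2 !merge_x1; apply: logsum => //.
have := opt a2 a2A; rewrite hxi.
have : rho * zeta p a2 <= rho * zeta p alpha' by rewrite ler_wpM2l.
lra.
Qed.

End Main.

Theorem mainTheorem4 (R : realType) (X W : finType)
  (p : X -> X -> W -> R) (d : X -> X -> R) (rho : R)
  (alpha' : X -> X -> W -> R) :
  is_pmf p ->
  (forall x xh, 0 <= d x xh) ->
  0 <= rho ->
  in_A alpha' ->
  (forall alpha : X -> X -> W -> R, in_A alpha ->
     xi p d alpha' (beta_id R X) + rho * zeta p alpha'
       <= xi p d alpha (beta_id R X) + rho * zeta p alpha) ->
  (forall alpha : X -> X -> W -> R, in_A alpha ->
     U_cost p d rho alpha' (beta_id R X) <= U_cost p d rho alpha (beta_id R X)) /\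
  (forall beta : X -> X -> R, in_B beta ->
     V_cost p d alpha' (beta_id R X) <= V_cost p d alpha' beta).
Proof.
move=> hp hd hrho hA opt; split; first by move=> alpha /opt.
move=> beta [b01 b1].
have key := @main_part2 R X W p d rho alpha' hp hrho hA opt.
rewrite /V_cost xi_id xiE; apply: ler_sum => y _.
have -> : C R X W p d alpha' y y = \sum_xh beta xh y * C R X W p d alpha' y y.
  by rewrite -mulr_suml b1 mul1r.
apply: ler_sum => xh _; apply: ler_wpM2l; first by case/andP: (b01 xh y).
exact: key.
Qed.
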